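(* Let $N\ge 1$, let $a_1,\dots,a_N>0$ and $T_1,\dots,T_N\ge 0$. For $P_{\mathrm{tot}}>0$ let $J^*(P_{\mathrm{tot}};T_1,\dots,T_N)$ denote the minimum of $\sum_{i=1}^N(\log_2(1+a_iP_i)-T_i)^2$ over all $P_1,\dots,P_N\ge 0$ with $\sum_i P_i\le P_{\mathrm{tot}}$, and let $\bar P_i=(2^{T_i}-1)/a_i$. Then $J^*$ is nonincreasing in $P_{\mathrm{tot}}$, equals $0$ at $P_{\mathrm{tot}}=\sum_i\bar P_i$ (when this sum is positive) and for all $P_{\mathrm{tot}}\ge\sum_i\bar P_i$. Moreover, for fixed $P_{\mathrm{tot}}$, $J^*$ is nondecreasing in each target $T_i$ (over $T_i\ge 0$, the other data fixed). *)

(* Defs.v *)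
From mathcomp Require Import all_boot all_order all_algebra.
From mathcomp Require Import all_classical all_reals all_analysis.
Set Implicit Arguments. Unset Strict Implicit. Unset Printing Implicit Defensive.
Import Order.TTheory GRing.Theory Num.Theory.
Local Open Scope classical_set_scope.
Local Open Scope ring_scope.

Definition log2 {R : realType} (x : R) : R := ln x / ln 2.

Definition Jobj {R : realType} (N : nat) (a T P : 'I_N -> R) : R :=
  \sum_(i < N) (log2 (1 + a i * P i) - T i) ^+ 2.

Definition feasible {R : realType} (N : nat) (Ptot : R) (P : 'I_N -> R) : Prop :=
  (forall i, 0 <= P i) /\ \sum_(i < N) P i <= Ptot.

Definition Jstar {R : realType} (N : nat) (a T : 'I_N -> R) (Ptot : R) : R :=
  inf [set Jobj a T P | P in @feasible R N Ptot].

Definition Pbar {R : realType} (N : nat) (a T : 'I_N -> R) (i : 'I_N) : R :=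
  (powR 2 (T i) - 1) / a i.

(* Main.v *)
Require Import Defs.
From mathcomp Require Import all_boot all_order all_algebra.
From mathcomp Require Import all_classical all_reals all_analysis.
From mathcomp Require Import ring lra.
Import Order.TTheory GRing.Theory Num.Theory.
Local Open Scope ring_scope.

Section Helpers.
Variable R : realType.

Lemma inf_cmp (S1 S2 : set R) : (forall x, S1 x -> 0 <= x) -> (S2 !=set0)%classic ->
  (forall y, S2 y -> exists2 x, S1 x & x <= y) -> inf S1 <= inf S2.
Proof.
move=> h0 ne h; apply: lb_le_inf => // y Hy.
have [x Hx le] := h y Hy; apply: le_trans le.
apply: ge_inf => //; exists 0 => z; exact: h0.
Qed.

Lemma ln2_gt0 : 0 < ln (2 : R).
Proof. apply: ln_gt0; lra. Qed.

Lemma log2_pow (c t : R) : 0 < c -> log2 (1 + c * ((powR 2 t - 1) / c)) = t.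
Proof.
move=> hc; have -> : 1 + c * ((powR 2 t - 1) / c) = powR 2 t.
  by field; rewrite gt_eqF.
rewrite /log2 ln_powR; field; rewrite gt_eqF //; exact: ln2_gt0.
Qed.

Lemma pow_ge1 (t : R) : 0 <= t -> 1 <= powR 2 t.
Proof. move=> ht; rewrite -[X in X <= _](powRr0 2); apply: (ler_powR (a:=2)) => //; lra. Qed.

Lemma log2_mono (c x y : R) : 0 < c -> 0 <= x -> x <= y ->
  log2 (1 + c * x) <= log2 (1 + c * y).
Proof.
move=> hc hx hxy; rewrite /log2 ler_pM2r ?invr_gt0 ?ln2_gt0 //.
rewrite ler_ln ?posrE; first by rewrite lerD2l ler_pM2l.
- have : 0 <= c * x by rewrite mulr_ge0 // ltW.
  lra.
- have hy : 0 <= y by lra.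
  have : 0 <= c * y by rewrite mulr_ge0 // ltW.
  lra.
Qed.

Lemma Jobj_ge0 N (a T P : 'I_N -> R) : 0 <= Jobj a T P.
Proof. by apply: sumr_ge0 => i _; rewrite sqr_ge0. Qed.

Lemma feas_ne N (a T : 'I_N -> R) (Ptot : R) : 0 < Ptot ->
  ([set Jobj a T P | P in @feasible R N Ptot] !=set0)%classic.
Proof.
move=> hP; exists (Jobj a T (fun=> 0)); exists (fun=> 0) => //.
split => // ; rewrite big1 // ltW //.
Qed.

End Helpers.

Theorem corollary1 (R : realType) (N : nat) (hN : (1 <= N)%N)
  (a T : 'I_N -> R) (ha : forall i, 0 < a i) (hT : forall i, 0 <= T i) :
  (* J* is nonincreasing in Ptot *)
  (forall P1 P2 : R, 0 < P1 -> P1 <= P2 -> Jstar a T P2 <= Jstar a T P1)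
  (* J* vanishes at Ptot = sum_i Pbar_i when this sum is positive *)
  /\ (0 < \sum_(i < N) Pbar a T i -> Jstar a T (\sum_(i < N) Pbar a T i) = 0)
  (* and for all Ptot >= sum_i Pbar_i *)
  /\ (forall Ptot : R, 0 < Ptot -> \sum_(i < N) Pbar a T i <= Ptot ->
        Jstar a T Ptot = 0)
  (* for fixed Ptot, J* is nondecreasing in each target T_i over T_i >= 0 *)
  /\ (forall (Ptot : R) (i : 'I_N) (t t' : R), 0 < Ptot -> 0 <= t -> t <= t' ->
        Jstar a (fun j => if j == i then t else T j) Ptot
        <= Jstar a (fun j => if j == i then t' else T j) Ptot).
Proof.
have part3 : forall Ptot : R, 0 < Ptot -> \sum_(i < N) Pbar a T i <= Ptot ->
        Jstar a T Ptot = 0.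
  move=> Ptot hP hs; apply/eqP; rewrite eq_le; apply/andP; split; last first.
    apply: lb_le_inf; first exact: feas_ne.
    by move=> y [P _ <-]; exact: Jobj_ge0.
  have -> : (0 : R) = Jobj a T (Pbar a T).
    rewrite /Jobj big1 // => i _; rewrite /Pbar log2_pow // subrr; by rewrite expr0n.
  apply: ge_inf; first by exists 0 => z [P _ <-]; exact: Jobj_ge0.
  exists (Pbar a T) => //; split => // i.
  rewrite /Pbar divr_ge0 //; last exact: ltW.
  have := @pow_ge1 R _ (hT i); lra.
split.
  move=> P1 P2 h1 h12; apply: inf_cmp; first by move=> x [P _ <-]; exact: Jobj_ge0.
    exact: feas_ne.
  move=> y [P [HP0 HPs] <-]; exists (Jobj a T P) => //; exists P => //.
  split => //; exact: le_trans h12.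
split.
  by move=> hs; apply: part3.
split; first exact: part3.
move=> Ptot i t t' hP ht htt'.
apply: inf_cmp; first by move=> x [P _ <-]; exact: Jobj_ge0.
  exact: feas_ne.
move=> y [P [HP0 HPs] <-].
set b := (powR 2 t - 1) / a i.
have hb0 : 0 <= b.
  rewrite /b divr_ge0 //; last exact: ltW.
  have := @pow_ge1 R _ ht; lra.
case: (lerP (P i) b) => hPb.
  exists (Jobj a (fun j => if j == i then t else T j) P); first by exists P.
  apply: ler_sum => j _; case: eqVneq => [->|//].
  have hL : log2 (1 + a i * P i) <= t.
    by rewrite -[X in _ <= X](@log2_pow R _ t (ha i)); apply: log2_mono.
  move: (log2 (1 + a i * P i)) hL => L hL; nra.
set P' := fun j => if j == i then b else P j.
exists (Jobj a (fun j => if j == i then t else T j) P').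
  exists P' => //; split.
    by move=> j; rewrite /P'; case: eqVneq.
  apply: le_trans HPs; apply: ler_sum => j _; rewrite /P'; case: eqVneq => [->|//].
  exact: ltW.
apply: ler_sum => j _; rewrite /P'; case: eqVneq => [->|//].
by rewrite log2_pow // subrr expr0n /= sqr_ge0.
Qed.
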